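(* Fix any choice function assigning to each nonempty literal $A$ a symbol $a_A\in A$, and write $\partial_A(r):=\partial_{a_A}(r)$. Then for all extended regular expressions $r$ and $s$: \[\llbracket r\rrbracket\subseteq\llbracket s\rrbracket\iff\big(\nu(r)\Rightarrow\nu(s)\big)\ \wedge\ \big(\forall A\in\mathrm{next}(r)\ltimes\mathrm{next}(s),\ A\neq\emptyset:\ \llbracket\partial_A(r)\rrbracket\subseteq\llbracket\partial_A(s)\rrbracket\big).\]
   Context: $\Sigma$ is a countable (possibly infinite) alphabet, $\Sigma^*$ the set of finite words, $\epsilon$ the empty word. Literals are sets of symbols drawn from a fixed family $U\subseteq\mathcal P(\Sigma)$ containing $\emptyset$, $\Sigma$ and all singletons and closed under union, intersection and complement $\overline{A}=\Sigma\setminus A$. Extended regular expressions (EREs) are generated by $r,s ::= \epsilon \mid A \mid r+s \mid r\cdot s \mid r^* \mid r\,\&\,s \mid \neg r$ with $A$ a literal; the empty literal is written $\emptyset$. Semantics: $\llbracket\epsilon\rrbracket=\{\epsilon\}$, $\llbracket A\rrbracket=A$, $\llbracket r+s\rrbracket=\llbracket r\rrbracket\cup\llbracket s\rrbracket$, $\llbracket r\cdot s\rrbracket$ the concatenation, $\llbracket r^*\rrbracket=\llbracket r\rrbracket^*$, $\llbracket r\&s\rrbracket=\llbracket r\rrbracket\cap\llbracket s\rrbracket$, $\llbracket\neg r\rrbracket=\Sigma^*\setminus\llbracket r\rrbracket$. Nullability: $\nu(\epsilon)=\nu(r^* )=\mathit{true}$, $\nu(A)=\mathit{false}$, $\nu(r+s)=\nu(r)\vee\nu(s)$,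 $\nu(r\cdot s)=\nu(r\&s)=\nu(r)\wedge\nu(s)$, $\nu(\neg r)=\neg\nu(r)$. Brzozowski derivative for $a\in\Sigma$: $\partial_a(\epsilon)=\emptyset$; $\partial_a(A)=\epsilon$ if $a\in A$, else $\emptyset$; $\partial_a(r+s)=\partial_a(r)+\partial_a(s)$; $\partial_a(r\cdot s)=\partial_a(r)\cdot s+\partial_a(s)$ if $\nu(r)$, and $\partial_a(r)\cdot s$ otherwise; $\partial_a(r^* )=\partial_a(r)\cdot r^*$; $\partial_a(r\&s)=\partial_a(r)\&\partial_a(s)$; $\partial_a(\neg r)=\neg\partial_a(r)$. Join: $\mathfrak L_1\Join\mathfrak L_2=\{A_1\cap A_2,\ A_1\cap\overline{\bigcup\mathfrak L_2},\ \overline{\bigcup\mathfrak L_1}\cap A_2 \mid A_1\in\mathfrak L_1, A_2\in\mathfrak L_2\}$; left join $\mathfrak L_1\ltimes\mathfrak L_2=\{A_1\cap A_2,\ A_1\cap\overline{\bigcup\mathfrak L_2}\mid A_1\in\mathfrak L_1, A_2\in\mathfrak L_2\}$; $\mathfrak L_1\sqcap\mathfrak L_2=\{A_1\cap A_2\mid A_1\in\mathfrak L_1,A_2\in\mathfrak L_2\}$. Next literals: $\mathrm{next}(\epsilon)=\{\emptyset\}$; $\mathrm{next}(A)=\{A\}$; $\mathrm{next}(r+s)=\mathrm{next}(r)\Join\mathrm{next}(s)$; $\mathrm{next}(r\cdot s)=\mathrm{next}(r)\Join\mathrm{next}(s)$ if $\nu(r)$ and $\mathrm{next}(r)$ otherwise;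 $\mathrm{next}(r^* )=\mathrm{next}(r)$; $\mathrm{next}(r\&s)=\mathrm{next}(r)\sqcap\mathrm{next}(s)$; $\mathrm{next}(\neg r)=\mathrm{next}(r)\cup\{\bigcap_{A\in\mathrm{next}(r)}\overline{A}\}$. *)

(* Defs.v *)
From mathcomp Require Import all_boot.
From Stdlib Require List.
Set Implicit Arguments. Unset Strict Implicit. Unset Printing Implicit Defensive.

Definition symset (S : Type) := S -> bool.

Section ERE.
Variable S : countType.

Inductive ere :=
| Eps
| Lit of symset S
| Plus of ere & ere
| Cat of ere & ere
| Star of ere
| And of ere & ere
| Not of ere.

Definition emptyset : symset S := fun _ => false.
Definition setI (A B : symset S) : symset S := fun a => A a && B a.
Definition setC (A : symset S) : symset S := fun a => ~~ A a.
Definition bigU (L : seq (symset S)) : symset S := fun a => has (fun A => A a) L.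
Definition bigIC (L : seq (symset S)) : symset S := fun a => all (fun A => ~~ A a) L.

Fixpoint lang (r : ere) (w : seq S) : Prop :=
  match r with
  | Eps => w = [::]
  | Lit A => exists a, w = [:: a] /\ A a
  | Plus r1 r2 => lang r1 w \/ lang r2 w
  | Cat r1 r2 => exists u v, w = u ++ v /\ lang r1 u /\ lang r2 v
  | Star r1 => exists ws : seq (seq S), w = flatten ws /\ (forall v, List.In v ws -> lang r1 v)
  | And r1 r2 => lang r1 w /\ lang r2 w
  | Not r1 => ~ lang r1 w
  end.

Fixpoint nullable (r : ere) : bool :=
  match r with
  | Eps => true
  | Lit _ => false
  | Plus r1 r2 => nullable r1 || nullable r2
  | Cat r1 r2 => nullable r1 && nullable r2
  | Star _ => true
  | And r1 r2 => nullable r1 && nullable r2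
  | Not r1 => ~~ nullable r1
  end.

Fixpoint brz_deriv (a : S) (r : ere) : ere :=
  match r with
  | Eps => Lit emptyset
  | Lit A => if A a then Eps else Lit emptyset
  | Plus r1 r2 => Plus (brz_deriv a r1) (brz_deriv a r2)
  | Cat r1 r2 => if nullable r1 then Plus (Cat (brz_deriv a r1) r2) (brz_deriv a r2)
                 else Cat (brz_deriv a r1) r2
  | Star r1 => Cat (brz_deriv a r1) (Star r1)
  | And r1 r2 => And (brz_deriv a r1) (brz_deriv a r2)
  | Not r1 => Not (brz_deriv a r1)
  end.

Definition join (L1 L2 : seq (symset S)) : seq (symset S) :=
  [seq setI A1 A2 | A1 <- L1, A2 <- L2]
  ++ [seq setI A1 (setC (bigU L2)) | A1 <- L1, A2 <- L2]
  ++ [seq setI (setC (bigU L1)) A2 | A1 <- L1, A2 <- L2].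

Definition ljoin (L1 L2 : seq (symset S)) : seq (symset S) :=
  [seq setI A1 A2 | A1 <- L1, A2 <- L2]
  ++ [seq setI A1 (setC (bigU L2)) | A1 <- L1, A2 <- L2].

Definition meetfam (L1 L2 : seq (symset S)) : seq (symset S) :=
  [seq setI A1 A2 | A1 <- L1, A2 <- L2].

Fixpoint next_lits (r : ere) : seq (symset S) :=
  match r with
  | Eps => [:: emptyset]
  | Lit A => [:: A]
  | Plus r1 r2 => join (next_lits r1) (next_lits r2)
  | Cat r1 r2 => if nullable r1 then join (next_lits r1) (next_lits r2) else next_lits r1
  | Star r1 => next_lits r1
  | And r1 r2 => meetfam (next_lits r1) (next_lits r2)
  | Not r1 => next_lits r1 ++ [:: bigIC (next_lits r1)]
  end.

Fixpoint lits_in (U : symset S -> Prop) (r : ere) : Prop :=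
  match r with
  | Eps => True
  | Lit A => U A
  | Plus r1 r2 | Cat r1 r2 | And r1 r2 => lits_in U r1 /\ lits_in U r2
  | Star r1 | Not r1 => lits_in U r1
  end.

Definition literal_family (U : symset S -> Prop) : Prop :=
  U emptyset /\ U (fun _ => true) /\ (forall a : S, U (pred1 a)) /\
  (forall A B, U A -> U B -> U (fun x => A x || B x)) /\
  (forall A B, U A -> U B -> U (setI A B)) /\
  (forall A, U A -> U (setC A)).

Definition lang_sub (r s : ere) : Prop := forall w, lang r w -> lang s w.

End ERE.

(* Main.v *)
Require Import Defs.
From mathcomp Require Import all_boot.
From Stdlib Require List.

Lemma in_cat' (T : Type) (x : T) (s1 s2 : seq T) :
  List.In x (s1 ++ s2) <-> List.In x s1 \/ List.In x s2.
Proof. exact: List.in_app_iff. Qed.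

Lemma in_ap (T1 T2 R : Type) (f : T1 -> T2 -> R) s t z :
  List.In z [seq f x y | x <- s, y <- t] <->
  exists x y, List.In x s /\ List.In y t /\ z = f x y.
Proof.
elim: s => [|x s IH] /=; first by split=> // -[? [? []]].
rewrite in_cat' IH; split.
- case=> [/List.in_map_iff [y [<- Hy]]|[x' [y [H1 [H2 ->]]]]].
  + by exists x, y; auto.
  + by exists x', y; auto.
- move=> [x' [y [[<-|H1] [H2 ->]]]].
  + by left; apply/List.in_map_iff; exists y.
  + by right; exists x', y.
Qed.

Section Pf.
Variable S : countType.
Implicit Types (r : ere S) (L : seq (symset S)).

Lemma nullableP r : nullable r <-> lang r [::].
Proof.
elim: r => //=.
- by move=> A; split=> // -[a [H _]].
- move=> r1 IH1 r2 IH2; rewrite -IH1 -IH2; case: (nullable r1); case: (nullable r2); intuition.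
- move=> r1 IH1 r2 IH2; split.
  + by case/andP=> /IH1 H1 /IH2 H2; exists [::], [::].
  + move=> [u [v [Huv [H1 H2]]]]; case: u Huv H1 => // ; case: v H2 => // H2 _ H1.
    by rewrite (proj2 IH1 H1) (proj2 IH2 H2).
- by move=> r1 _; split=> // _; exists [::]; split.
- move=> r1 IH1 r2 IH2; split.
  + by case/andP=> /IH1 H1 /IH2 H2.
  + by move=> [/IH1 -> /IH2 ->].
- move=> r1 IH1; rewrite -IH1; case: (nullable r1); intuition.
Qed.

Lemma star_cons (r : ere S) a w :
  lang (Star r) (a :: w) <->
  exists u v, w = u ++ v /\ lang r (a :: u) /\ lang (Star r) v.
Proof.
split.
- move=> [ws [Hw Hall]]; elim: ws Hw Hall => [|x ws IH] //= Hw Hall.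
  case: x Hw Hall => [|b u] /= Hw Hall.
  + apply: IH => // v Hv; apply: Hall; by right.
  + case: Hw => -> ->; exists u, (flatten ws); split=> //; split.
    * by apply: Hall; left.
    * by exists ws; split=> // v Hv; apply: Hall; right.
- move=> [u [v [-> [Hu [ws [-> Hws]]]]]].
  exists ((a :: u) :: ws); split=> // x [<-|Hx] //; exact: Hws.
Qed.

Lemma derivP a r w : lang (brz_deriv a r) w <-> lang r (a :: w).
Proof.
elim: r w => /=.
- by move=> w; split=> [[b [_ []]]|].
- move=> A w; case HA: (A a); split.
  + by move=> ->; exists a.
  + by move=> [b [[_ ->] _]].
  + by move=> [b [_ []]].
  + by move=> [b [[<- _]]]; rewrite HA.
- by move=> r1 IH1 r2 IH2 w; rewrite IH1 IH2.
- move=> r1 IH1 r2 IH2 w.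
  have H : (exists u v, w = u ++ v /\ lang (brz_deriv a r1) u /\ lang r2 v) <->
           (exists u v, a :: w = u ++ v /\ lang r1 u /\ lang r2 v /\ u <> [::]).
  { split.
    - move=> [u [v [-> [/IH1 H1 H2]]]]; by exists (a :: u), v.
    - move=> [[|b u] [v [Hw [H1 [H2 Hn]]]]] //; case: Hw => Hab ->; subst b.
      by exists u, v; split=> //; split=> //; apply/IH1. }
  case Hn: (nullable r1) => /=; rewrite H ?IH2; split.
  + move=> [[u [v [? [? [? _]]]]]|H2]; first by exists u, v.
    by exists [::], (a :: w); split=> //; split=> //; apply/nullableP.
  + move=> [[|b u] [v [Hw [H1 H2]]]]; first by right; rewrite Hw.
    by left; exists (b :: u), v.
  + by move=> [u [v [? [? [? _]]]]]; exists u, v.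
  + move=> [[|b u] [v [Hw [H1 H2]]]].
    * by move/nullableP: H1; rewrite Hn.
    * by exists (b :: u), v.
- move=> r1 IH1 w; change (lang (Cat (brz_deriv a r1) (Star r1)) w <-> lang (Star r1) (a :: w)); rewrite star_cons; split.
  + by move=> [u [v [-> [/IH1 ? ?]]]]; exists u, v.
  + by move=> [u [v [-> [/IH1 ? ?]]]]; exists u, v.
- by move=> r1 IH1 r2 IH2 w; rewrite IH1 IH2.
- by move=> r1 IH1 w; rewrite IH1.
Qed.

Definition eqv r1 r2 := forall w, lang r1 w <-> lang r2 w.
Definition agree r a b := eqv (brz_deriv a r) (brz_deriv b r).
Definition cond L a b :=
  (exists A : symset S, List.In A L /\ A a /\ A b) \/ (~~ Defs.bigU L a /\ ~~ Defs.bigU L b).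
Definition empt r a := forall w, ~ lang (brz_deriv a r) w.

Lemma bigUP L a : reflect (exists A, List.In A L /\ A a) (Defs.bigU L a).
Proof.
rewrite /Defs.bigU; elim: L => [|B L IH] /=; first by constructor=> -[? [[]]].
case HB: (B a) => /=.
- by constructor; exists B; split=> //; left.
- case: IH => H; constructor.
  + by move: H => [A [HA Ha]]; exists A; split=> //; right.
  + by move=> [A [[<-|HA] Ha]]; [rewrite HB in Ha | apply: H; exists A].
Qed.

Lemma bigICE L a : Defs.bigIC L a = ~~ Defs.bigU L a.
Proof. by rewrite /Defs.bigIC /Defs.bigU; elim: L => //= B L ->; rewrite negb_or. Qed.

Lemma join_cond L1 L2 A a b : List.In A (join L1 L2) -> A a -> A b ->
  cond L1 a b /\ cond L2 a b.
Proof.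
rewrite /join !in_cat' !in_ap.
move=> [|[|]] [A1 [A2 [H1 [H2 ->]]]] /andP [Ha1 Ha2] /andP [Hb1 Hb2].
- by split; left; [exists A1 | exists A2].
- by split; [left; exists A1 | right].
- by split; [right | left; exists A2].
Qed.

Lemma join_cover L1 L2 a : L1 <> [::] -> L2 <> [::] ->
  ~~ Defs.bigU (join L1 L2) a -> ~~ Defs.bigU L1 a /\ ~~ Defs.bigU L2 a.
Proof.
case: L1 => // A1' L1'; case: L2 => // A2' L2' _ _.
set L1 := A1' :: L1'; set L2 := A2' :: L2'.
have In1 : List.In A1' L1 by left. have In2 : List.In A2' L2 by left.
move=> H.
have K : forall A, List.In A (join L1 L2) -> ~~ A a.
{ by move=> A HA; apply/negP=> Ha; move/negP: H; apply; apply/bigUP; exists A. }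
rewrite /join in K.
case E1: (Defs.bigU L1 a); case E2: (Defs.bigU L2 a) => //.
- move/bigUP: E1 => [A1 [H1 Ha1]]; move/bigUP: E2 => [A2 [H2 Ha2]].
  have HX : List.In (Defs.setI A1 A2) ([seq Defs.setI A1 A2 | A1 <- L1, A2 <- L2] ++
    [seq Defs.setI A1 (Defs.setC (Defs.bigU L2)) | A1 <- L1, A2 <- L2] ++
    [seq Defs.setI (Defs.setC (Defs.bigU L1)) A2 | A1 <- L1, A2 <- L2]).
  { by apply/in_cat'; left; apply/in_ap; exists A1, A2. }
  by move: (K _ HX); rewrite /Defs.setI Ha1 Ha2.
- move/bigUP: E1 => [A1 [H1 Ha1]].
  have HX : List.In (Defs.setI A1 (Defs.setC (Defs.bigU L2))) ([seq Defs.setI A1 A2 | A1 <- L1, A2 <- L2] ++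
    [seq Defs.setI A1 (Defs.setC (Defs.bigU L2)) | A1 <- L1, A2 <- L2] ++
    [seq Defs.setI (Defs.setC (Defs.bigU L1)) A2 | A1 <- L1, A2 <- L2]).
  { apply/in_cat'; right; apply/in_cat'; left.
    by apply/in_ap; exists A1, A2'. }
  by move: (K _ HX); rewrite /Defs.setI /Defs.setC Ha1 E2.
- move/bigUP: E2 => [A2 [H2 Ha2]].
  have HX : List.In (Defs.setI (Defs.setC (Defs.bigU L1)) A2) ([seq Defs.setI A1 A2 | A1 <- L1, A2 <- L2] ++
    [seq Defs.setI A1 (Defs.setC (Defs.bigU L2)) | A1 <- L1, A2 <- L2] ++
    [seq Defs.setI (Defs.setC (Defs.bigU L1)) A2 | A1 <- L1, A2 <- L2]).
  { apply/in_cat'; right; apply/in_cat'; right.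
    by apply/in_ap; exists A1', A2. }
  by move: (K _ HX); rewrite /Defs.setI /Defs.setC Ha2 E1.
Qed.

Lemma next_ne r : next_lits r <> [::].
Proof.
elim: r => //=.
- by move=> r1 + r2; rewrite /join; case: (next_lits r1) => // ? ?; case: (next_lits r2).
- move=> r1 + r2; case: (nullable r1) => //; rewrite /join.
  by case: (next_lits r1) => // ? ?; case: (next_lits r2).
- by move=> r1 + r2; rewrite /meetfam; case: (next_lits r1) => // ? ?; case: (next_lits r2).
- by move=> r1 _; case: (next_lits r1).
Qed.

Lemma eqv_cat r1 r1' r2 : eqv r1 r1' -> eqv (Cat r1 r2) (Cat r1' r2).
Proof.
move=> H w /=; split=> [[u [v [? [/H ? ?]]]]|[u [v [? [/H ? ?]]]]]; by exists u, v.
Qed.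

Lemma empt_cat r1 r2 : (forall w, ~ lang r1 w) -> forall w, ~ lang (Cat r1 r2) w.
Proof. by move=> H w [u [v [_ [/H]]]]. Qed.

Lemma key r :
  (forall A a b, List.In A (next_lits r) -> A a -> A b -> agree r a b) /\
  (forall a, ~~ Defs.bigU (next_lits r) a -> empt r a).
Proof.
have gen : forall r, (forall A a b, List.In A (next_lits r) -> A a -> A b -> agree r a b) ->
  (forall a, ~~ Defs.bigU (next_lits r) a -> empt r a) ->
  forall a b, cond (next_lits r) a b -> agree r a b.
{ move=> r0 H1 H2 a b [[A [HA [Ha Hb]]]|[Na Nb]]; first exact: H1 HA Ha Hb.
  by move=> w; split=> [/(H2 _ Na)|/(H2 _ Nb)]. }
elim: r => /=.
- split; first by move=> A a b [<-|].
  by move=> a _ w /= [? [_ []]].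
- move=> A0; split.
  + by move=> A a b [<-|] // Ha Hb w; rewrite /= Ha Hb.
  + move=> a; rewrite /Defs.bigU /= orbF => /negbTE Ha w /=; rewrite Ha.
    by move=> [? [_ []]].
- move=> r1 [IH1 IH1'] r2 [IH2 IH2']; split.
  + move=> A a b HA Ha Hb; have [C1 C2] := join_cond _ _ _ _ _ HA Ha Hb.
    have G1 := gen _ IH1 IH1' _ _ C1; have G2 := gen _ IH2 IH2' _ _ C2.
    by move=> w /=; rewrite G1 G2.
  + move=> a /(join_cover _ _ _ (next_ne _) (next_ne _)) [N1 N2] w /= [].
    * exact: IH1'. * exact: IH2'.
- move=> r1 [IH1 IH1'] r2 [IH2 IH2']; case Hn: (nullable r1); split.
  + move=> A a b HA Ha Hb; have [C1 C2] := join_cond _ _ _ _ _ HA Ha Hb.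
    have G1 := gen _ IH1 IH1' _ _ C1; have G2 := gen _ IH2 IH2' _ _ C2.
    have E : forall c, brz_deriv c (Cat r1 r2) = Plus (Cat (brz_deriv c r1) r2) (brz_deriv c r2) by move=> c /=; rewrite Hn.
    move=> w; rewrite /agree !E.
    change (lang (Cat (brz_deriv a r1) r2) w \/ lang (brz_deriv a r2) w <-> lang (Cat (brz_deriv b r1) r2) w \/ lang (brz_deriv b r2) w).
    by rewrite (eqv_cat _ _ r2 G1) G2.
  + move=> a /(join_cover _ _ _ (next_ne _) (next_ne _)) [N1 N2] w /=; rewrite Hn /= => -[].
    * exact: empt_cat _ _ (IH1' _ N1) w. * exact: IH2'.
  + move=> A a b HA Ha Hb w /=; rewrite Hn; exact: eqv_cat _ _ _ (IH1 _ _ _ HA Ha Hb) w.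
  + move=> a N1 w /=; rewrite Hn; exact: empt_cat _ _ (IH1' _ N1) w.
- move=> r1 [IH1 IH1']; split.
  + move=> A a b HA Ha Hb w; exact: (eqv_cat _ _ (Star r1) (IH1 _ _ _ HA Ha Hb) w).
  + move=> a N1 w; exact: (empt_cat _ (Star r1) (IH1' _ N1) w).
- move=> r1 [IH1 IH1'] r2 [IH2 IH2']; split.
  + move=> A a b; rewrite /meetfam in_ap => -[A1 [A2 [H1 [H2 ->]]]].
    move=> /andP [Ha1 Ha2] /andP [Hb1 Hb2] w /=.
    by rewrite (IH1 _ _ _ H1 Ha1 Hb1) (IH2 _ _ _ H2 Ha2 Hb2).
  + move=> a N w /= [L1 L2].
    case E1: (Defs.bigU (next_lits r1) a); last by apply: (IH1' a _ w L1); rewrite E1.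
    case E2: (Defs.bigU (next_lits r2) a); last by apply: (IH2' a _ w L2); rewrite E2.
    move/bigUP: E1 => [A1 [H1 Ha1]]; move/bigUP: E2 => [A2 [H2 Ha2]].
    move/negP: N; apply; apply/bigUP; exists (Defs.setI A1 A2); split.
    * by rewrite /meetfam; apply/in_ap; exists A1, A2.
    * by rewrite /Defs.setI Ha1 Ha2.
- move=> r1 [IH1 IH1']; split.
  + move=> A a b /in_cat' [HA|[<-|//]] Ha Hb w /=.
    * by rewrite (IH1 _ _ _ HA Ha Hb).
      rewrite bigICE in Ha; rewrite bigICE in Hb.
      by split=> _ H; [exact: (IH1' _ Hb w H) | exact: (IH1' _ Ha w H)].
  + move=> a N; exfalso; move/negP: N; apply.
    case E: (Defs.bigU (next_lits r1) a).
    * move/bigUP: E => [A [HA Ha]]; apply/bigUP; exists A; split=> //.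
      by apply/in_cat'; left.
    * apply/bigUP; exists (Defs.bigIC (next_lits r1)); split.
      - by apply/in_cat'; right; left.
      - by rewrite bigICE E.
Qed.

Lemma next_in_U (U : symset S -> Prop) r : literal_family U -> lits_in U r ->
  forall A, List.In A (next_lits r) -> U A.
Proof.
move=> [U0 [UT [U1 [UU [UI UC]]]]].
have UbU : forall L, (forall A, List.In A L -> U A) -> U (Defs.bigU L).
{ elim=> [|B L IH] H; first exact: U0.
  apply: (UU B (Defs.bigU L)); [apply: H; left | apply: IH => A HA; apply: H; right] => //. }
have UbI : forall L, (forall A, List.In A L -> U A) -> U (Defs.bigIC L).
{ elim=> [|B L IH] H; first exact: UT.
  apply: (UI (Defs.setC B) (Defs.bigIC L)); first by apply: UC; apply: H; left.
  by apply: IH => A HA; apply: H; right. }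
have Uj : forall L1 L2, (forall A, List.In A L1 -> U A) -> (forall A, List.In A L2 -> U A) ->
  forall A, List.In A (join L1 L2) -> U A.
{ move=> L1 L2 H1 H2 A; rewrite /join !in_cat' !in_ap.
  move=> [|[|]] [A1 [A2 [I1 [I2 ->]]]]; apply: UI; auto. }
elim: r => /=.
- by move=> _ A [<-|].
- by move=> A0 H A [<-|].
- by move=> r1 IH1 r2 IH2 [H1 H2]; apply: Uj; auto.
- move=> r1 IH1 r2 IH2 [H1 H2]; case: (nullable r1); auto; by apply: Uj; auto.
- by auto.
- move=> r1 IH1 r2 IH2 [H1 H2] A; rewrite /meetfam in_ap => -[A1 [A2 [I1 [I2 ->]]]].
  by apply: UI; auto.
- move=> r1 IH1 H A /in_cat' [|[<-|//]]; auto.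
Qed.

End Pf.

Theorem theorem4 (S : countType) (U : symset S -> Prop)
  (HU : literal_family U)
  (ch : symset S -> S)
  (Hch : forall A : symset S, U A -> (exists a, A a) -> A (ch A))
  (r s : ere S) (Hr : lits_in U r) (Hs : lits_in U s) :
  lang_sub r s <->
  ((nullable r -> nullable s) /\
   (forall A : symset S, List.In A (ljoin (next_lits r) (next_lits s)) ->
      (exists a, A a) ->
      lang_sub (brz_deriv (ch A) r) (brz_deriv (ch A) s))).
Proof.
split.
- move=> H; split.
  + by move/nullableP/H/nullableP.
  + by move=> A _ _ w /derivP /H /derivP.
- move=> [Hn Hd] [|a w].
  + by move/nullableP/Hn/nullableP.
  + move/derivP=> Hw; apply/derivP.
    have [Kr Kr'] := key _ r; have [Ks Ks'] := key _ s.
    have Ur := next_in_U _ _ _ HU Hr; have Us := next_in_U _ _ _ HU Hs.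
    case Er: (Defs.bigU (next_lits r) a); last by exfalso; apply: (Kr' a _ w Hw); rewrite Er.
    move/bigUP: Er => [A1 [H1 Ha1]].
    case Es: (Defs.bigU (next_lits s) a).
    * move/bigUP: Es => [A2 [H2 Ha2]].
      set A := Defs.setI A1 A2.
      have HA : A a by rewrite /A /Defs.setI Ha1 Ha2.
      have UA : U A by case: HU => [_ [_ [_ [_ [UI _]]]]]; apply: UI; auto.
      have /andP [c1 c2] := Hch A UA (ex_intro _ a HA).
      apply/(Ks _ _ _ H2 Ha2 c2); apply: (Hd A).
      - by rewrite /ljoin; apply/in_cat'; left; apply/in_ap; exists A1, A2.
      - by exists a.
      - by apply/(Kr _ _ _ H1 Ha1 c1).
    * set A := Defs.setI A1 (Defs.setC (Defs.bigU (next_lits s))).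
      have HA : A a by rewrite /A /Defs.setI /Defs.setC Ha1 Es.
      case: HU => [U0 [UT [U1 [UU [UI UC]]]]].
      have UbU : forall L, (forall A, List.In A L -> U A) -> U (Defs.bigU L).
      { elim=> [|B L IH] H; first exact: U0.
        apply: (UU B (Defs.bigU L)); [apply: H; left | apply: IH => A' HA'; apply: H; right] => //. }
      have UA : U A by apply: UI; auto.
      have /andP [c1 c2] := Hch A UA (ex_intro _ a HA).
      have [A2 H2] : exists A2, List.In A2 (next_lits s).
      { by case E: (next_lits s) (next_ne _ s) => [|A2 ?] // _; exists A2; left. }
      have Hs' : ~~ Defs.bigU (next_lits s) (ch A) by [].
      have Hsa : ~~ Defs.bigU (next_lits s) a by rewrite Es.
      have := Hd A _ (ex_intro _ a HA) w.
      move=> Hdd.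
      exfalso; apply: (Ks' _ Hs' w); apply: Hdd.
      - by rewrite /ljoin; apply/in_cat'; right; apply/in_ap; exists A1, A2.
      - by apply/(Kr _ _ _ H1 Ha1 c1).
Qed.
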